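(* Let $\mathcal{G}=(V,L)$ be a finite connected undirected graph with monitor set $M$ and non-monitor set $N=V\setminus M$, $\sigma=|N|$, let $S\subseteq N$ be nonempty and let $q$ be an integer with $0\le q\le\sigma-1$. Then the following are equivalent: (1) for every set $V'\subseteq N$ with $|V'|\le q$, each connected component of $\mathcal{G}-V'$ that contains a node of $S$ contains a monitor; (2) $\Gamma_{\mathcal{G}^*}(S,m')\ge q+1$.
   Context: $\mathcal{G}-V'$ denotes deletion of the nodes of $V'$ and incident links. $\mathcal{N}(M)$ is the set of non-monitors adjacent to at least one monitor. $\mathcal{G}^*$ is obtained from $\mathcal{G}$ by deleting all monitors, adding a virtual node $m'$, and linking $m'$ to every node of $\mathcal{N}(M)$. For nodes $s,t$ of a graph $\mathcal{H}$, $C_{\mathcal{H}}(s,t)$ is a minimum-cardinality set of nodes (other than $s,t$) whose deletion destroys all $s$–$t$ paths; if $s,t$ are adjacent, $C_{\mathcal{H}}(s,t):=V(\mathcal{H})\setminus\{t\}$. $\Gamma_{\mathcal{H}}(S,m):=\min_{w\in S}|C_{\mathcal{H}}(w,m)|$. *)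

(* Defs.v *)
From mathcomp Require Import all_boot.
Set Implicit Arguments. Unset Strict Implicit. Unset Printing Implicit Defensive.

(* A graph is given by a finite vertex type, a vertex set A and an adjacency
   relation r; only edges with both ends in A count. *)
Definition rrel (T : finType) (A : {set T}) (r : rel T) : rel T :=
  fun x y => [&& x \in A, y \in A & r x y].

Definition simple_graph (T : finType) (e : rel T) : Prop :=
  symmetric e /\ irreflexive e.
Definition connected_graph (T : finType) (e : rel T) : Prop :=
  forall x y : T, connect e x y.

Definition separates (T : finType) (A : {set T}) (r : rel T) (s t : T)
  (X : {set T}) : bool :=
  ~~ connect (rrel (A :\: X) r) s t.

Definition mincut (T : finType) (A : {set T}) (r : rel T) (s t : T) : nat :=
  if rrel A r s t then #|A :\ t|
  else \big[minn/#|A|]_(X : {set T} | (X \subset A :\ s :\ t) && separates A r s t X) #|X|.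

Definition Gamma (T : finType) (A : {set T}) (r : rel T) (S : {set T}) (m : T) : nat :=
  \big[minn/#|A|]_(w in S) mincut A r w m.

Definition nbM (T : finType) (e : rel T) (M : {set T}) : {set T} :=
  [set v | (v \notin M) && [exists m in M, e v m]].

(* G*: vertices Some v for v non-monitor, plus virtual node m' = None *)
Definition Gstar_V (T : finType) (M : {set T}) : {set option T} :=
  None |: [set Some v | v in ~: M].

Definition Gstar_E (T : finType) (e : rel T) (M : {set T}) : rel (option T) :=
  fun x y => match x, y with
  | Some u, Some v => e u v
  | None, Some v => v \in nbM e M
  | Some u, None => u \in nbM e M
  | None, None => false
  end.

(* Main.v *)
Require Import Defs.
From mathcomp Require Import all_boot.
From mathcomp Require Import zify.

Lemma conn_inv (T : finType) (r : rel T) (P : T -> Prop) :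
  (forall y z, P y -> r y z -> P z) -> forall x y, connect r x y -> P x -> P y.
Proof.
move=> hP x y /connectP [p]; elim: p x => [|z p IH] x /=; first by move=> _ ->.
by move=> /andP [rxz pz] ly Px; apply: (IH z pz ly); apply: hP Px rxz.
Qed.

Lemma bigmin_le_seq (I : eqType) (r : seq I) (P : pred I) (F : I -> nat) x i :
  i \in r -> P i -> \big[minn/x]_(j <- r | P j) F j <= F i.
Proof.
elim: r => //= a r IH; rewrite in_cons big_cons => /orP [/eqP <-|ir] Pi.
  by rewrite Pi geq_minl.
case: (P a); last exact: IH.
by rewrite geq_min IH ?orbT.
Qed.

Lemma bigmin_le (I : finType) (P : pred I) (F : I -> nat) x i :
  P i -> \big[minn/x]_(j | P j) F j <= F i.
Proof. by move=> Pi; apply: bigmin_le_seq => //; rewrite mem_index_enum. Qed.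

Lemma inA_Some (T : finType) (M : {set T}) v :
  (Some v \in Gstar_V M) = (v \notin M).
Proof. by rewrite /Gstar_V in_setU1 /= mem_imset ?inE //; apply: Some_inj. Qed.

Lemma inA_None (T : finType) (M : {set T}) : None \in Gstar_V M.
Proof. by rewrite /Gstar_V setU11. Qed.

Lemma star_to_G (T : finType) (e : rel T) (M : {set T}) (X : {set option T})
  (V' : {set T}) s :
  (forall v, (Some v \in X) = (v \in V')) -> V' \subset ~: M ->
  connect (rrel (Gstar_V M :\: X) (Gstar_E e M)) (Some s) None ->
  exists2 m, m \in M & connect (rrel (~: V') e) s m.
Proof.
move=> hX sV c.
pose P (y : option T) := (exists2 m, m \in M & connect (rrel (~: V') e) s m)
  \/ exists2 u, y = Some u & connect (rrel (~: V') e) s u.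
have : P None.
  apply: (@conn_inv _ _ P _ _ _ c); last by right; exists s.
  move=> y z Py /and3P [hy hz ryz].
  case: Py => [h|[u yu csu]]; first by left.
  subst y; move: hy; rewrite in_setD hX => /andP [nuV _].
  case: z hz ryz => [v|] /=.
    rewrite in_setD hX => /andP [nvV _] euv; right; exists v => //.
    by apply: connect_trans csu (connect1 _); rewrite /rrel !inE nuV nvV.
  move=> _; rewrite /nbM inE => /andP [_ /existsP [m /andP [mM eum]]].
  left; exists m => //; apply: connect_trans csu (connect1 _).
  rewrite /rrel !inE nuV eum /= andbT; apply/negP => mV.
  by move: (subsetP sV _ mV); rewrite inE mM.
by case => // [[u]].
Qed.

Lemma G_to_star (T : finType) (e : rel T) (M : {set T}) (X : {set option T})
  (V' : {set T}) s m :
  (forall v, (Some v \in X) = (v \in V')) -> None \notin X -> s \notin M ->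
  m \in M -> connect (rrel (~: V') e) s m ->
  connect (rrel (Gstar_V M :\: X) (Gstar_E e M)) (Some s) None.
Proof.
move=> hX nX sM mM c.
pose P (y : T) := connect (rrel (Gstar_V M :\: X) (Gstar_E e M)) (Some s) None
  \/ (y \notin M /\ connect (rrel (Gstar_V M :\: X) (Gstar_E e M)) (Some s) (Some y)).
have : P m.
  apply: (@conn_inv _ _ P _ _ _ c); last by right; split.
  move=> y z Py /and3P [hy hz eyz].
  case: Py => [h|[yM csy]]; first by left.
  move: hy hz; rewrite !inE => nyV nzV.
  case zM: (z \in M).
    left; apply: connect_trans csy (connect1 _).
    rewrite /rrel !in_setD hX nyV nX inA_None inA_Some yM /=.
    by rewrite /nbM inE yM /=; apply/existsP; exists z; rewrite zM.
  right; split; first by rewrite zM.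
  apply: connect_trans csy (connect1 _).
  by rewrite /rrel !in_setD !hX nyV nzV !inA_Some yM zM.
by case => // [[]]; rewrite mM.
Qed.

Theorem lemma4 (T : finType) (e : rel T) (M S : {set T}) (q : nat) :
  simple_graph e -> connected_graph e ->
  S \subset ~: M -> S != set0 ->
  q <= #|~: M| - 1 ->
  ((forall V' : {set T}, V' \subset ~: M -> #|V'| <= q ->
      forall s, s \in S -> s \notin V' ->
        exists2 m, m \in M & connect (rrel (~: V') e) s m)
   <->
   q.+1 <= Gamma (Gstar_V M) (Gstar_E e M) [set Some w | w in S] None).
Proof.
move=> _ _ SM Sn0 hq.
have hM : 0 < #|~: M|.
  rewrite card_gt0; case/set0Pn: Sn0 => s sS; apply/set0Pn; exists s.
  exact: subsetP SM _ sS.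
have hcA : #|~: M| <= #|Gstar_V M :\ None|.
  rewrite -(card_imset _ Some_inj); apply: subset_leq_card.
  by apply/subsetP => x /imsetP [v hv ->]; rewrite in_setD1 inA_Some -in_setC hv.
have hcA2 : #|Gstar_V M :\ None| <= #|Gstar_V M|.
  by apply: subset_leq_card; apply: subD1set.
have hqM : q < #|~: M| by lia.
have hqA : q < #|Gstar_V M| := leq_trans hqM (leq_trans hcA hcA2).
split.
- move=> H1; rewrite /Gamma.
  apply: (big_ind (fun x => q < x)); first exact: hqA.
    by move=> x y; rewrite leq_min => -> ->.
  move=> w /imsetP [s sS ->]; rewrite /mincut.
  case: ifP => adj.
    exact: leq_trans hqM hcA.
  apply: (big_ind (fun x => q < x)); first exact: hqA.
    by move=> x y; rewrite leq_min => -> ->.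
  move=> X /andP [sub sep]; rewrite ltnNge; apply/negP => hX.
  pose V' := [set v | Some v \in X].
  have hV : forall v, (Some v \in X) = (v \in V') by move=> v; rewrite inE.
  have sV : V' \subset ~: M.
    apply/subsetP => v; rewrite inE => hv; move: (subsetP sub _ hv).
    by rewrite !in_setD1 inA_Some inE => /and3P [_ _ ->].
  have cV : #|V'| <= #|X|.
    rewrite -(card_imset _ Some_inj); apply: subset_leq_card.
    by apply/subsetP => x /imsetP [v]; rewrite inE => hv ->.
  have nsV : s \notin V'.
    rewrite inE; apply/negP => hs; move: (subsetP sub _ hs).
    by rewrite !in_setD1 eqxx andbF.
  have nX : None \notin X.
    by apply/negP => hs; move: (subsetP sub _ hs); rewrite !in_setD1 eqxx.
  have [m mM c] := H1 V' sV (leq_trans cV hX) s sS nsV.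
  move/negP: sep; apply; apply: (@G_to_star T e M X V' s m hV nX _ mM c).
  by rewrite -in_setC (subsetP SM).
- move=> H2 V' sV cV s sS nsV.
  case: (boolP [exists m in M, connect (rrel (~: V') e) s m]).
    by move=> /existsP [m /andP [mM c]]; exists m.
  move=> nex; exfalso.
  have : q < mincut (Gstar_V M) (Gstar_E e M) (Some s) None.
    apply: (leq_trans H2); rewrite /Gamma; apply: bigmin_le.
    exact: imset_f.
  rewrite /mincut; case: ifP => adj.
    move: adj; rewrite /rrel => /and3P [_ _]; rewrite /= /nbM inE => /andP [_ /existsP [m /andP [mM esm]]].
    move=> _; move/negP: nex; apply; apply/existsP; exists m; rewrite mM /=.
    apply: connect1; rewrite /rrel !inE nsV esm andbT /=; apply/negP => mV.
    by move: (subsetP sV _ mV); rewrite inE mM.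
  move=> h.
  have hX : forall v, (Some v \in [set Some x | x in V']) = (v \in V').
    by move=> v; rewrite mem_imset //; apply: Some_inj.
  suff : q < #|[set Some x | x in V']|.
    by rewrite (card_imset V' Some_inj) ltnNge cV.
  apply: (leq_trans h); apply: bigmin_le.
  apply/andP; split.
    apply/subsetP => x /imsetP [v hv ->]; rewrite !in_setD1 inA_Some /=.
    have -> : (Some v != Some s) by apply/negP => /eqP [vs]; move: nsV; rewrite -vs hv.
    by move: (subsetP sV _ hv); rewrite inE => ->.
  apply/negP => c; have [m mM cm] := @star_to_G T e M _ V' s hX sV c.
  by move/negP: nex; apply; apply/existsP; exists m; rewrite mM.
Qed.
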